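(* For every natural number $n\geq 1$, $\tau(B_n) > B_{\lfloor \tau(n)/3\rfloor}$, where $\lfloor\cdot\rfloor$ denotes the floor function.
   Context: The balancing numbers $(B_n)_{n\geq 0}$ are defined by $B_0=0$, $B_1=1$, $B_{n+1}=6B_n-B_{n-1}$ for $n\geq 1$. For a positive integer $m$, $\tau(m)$ denotes the number of positive divisors of $m$. *)

(* Defs.v *)
From mathcomp Require Import all_boot.
Set Implicit Arguments. Unset Strict Implicit. Unset Printing Implicit Defensive.

(* Balancing numbers: B_0 = 0, B_1 = 1, B_{n+1} = 6 B_n - B_{n-1}.
   The sequence is strictly increasing and nonnegative, so the truncated
   nat subtraction is exact. *)
Fixpoint balancing (n : nat) : nat :=
  match n with
  | 0 => 0
  | 1 => 1
  | (m.+1 as k).+1 => 6 * balancing k - balancing m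
  end.

Definition tau (m : nat) : nat := size (divisors m).

(* Main.v *)
Require Import Defs.
Set Warnings "-notation-overridden -ambiguous-paths -deprecated".
From mathcomp Require Import all_boot all_order all_algebra all_field.
From mathcomp Require Import ring zify.
Set Implicit Arguments. Unset Strict Implicit. Unset Printing Implicit Defensive.
Import Order.TTheory GRing.Theory Num.Theory.
Local Notation B := balancing.

Fixpoint lucasb (n : nat) : nat :=
  match n with
  | 0 => 1
  | 1 => 3
  | (m.+1 as k).+1 => 6 * lucasb k - lucasb m
  end.
Local Notation C := lucasb.

Lemma BSS n : B n.+2 = 6 * B n.+1 - B n. Proof. by []. Qed.
Lemma CSS n : C n.+2 = 6 * C n.+1 - C n. Proof. by []. Qed.

Lemma B_mono n : B n <= B n.+1.
Proof. elim: n => [|n IH] //; rewrite BSS; lia. Qed.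
Lemma C_mono n : C n <= C n.+1.
Proof. elim: n => [|n IH] //; rewrite CSS; lia. Qed.

Lemma B_gt0 n : 0 < n -> 0 < B n.
Proof.
elim: n => [|n IH] // _; case: n IH => [|n] IH //.
by apply: leq_trans (B_mono _); apply: IH.
Qed.

Lemma B_le6 k : B k.+1 <= 6 ^ k.
Proof.
elim: k => [|k IH] //; rewrite BSS expnS; lia.
Qed.
Local Open Scope ring_scope.
Definition s2 : algC := sqrtC 2.
Definition al : algC := 3 + 2 * s2.
Definition be : algC := 3 - 2 * s2.

Lemma s2K : s2 ^+ 2 = 2. Proof. exact: sqrtCK. Qed.
Lemma s2_ge0 : 0 <= s2. Proof. by rewrite /s2 sqrtC_ge0 ler0n. Qed.

Lemma albe : al * be = 1.
Proof.
have -> : al * be = 9 - 4 * s2 ^+ 2 by rewrite /al /be; ring.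
by rewrite s2K; ring.
Qed.
Lemma al2 : al ^+ 2 = 6 * al - 1.
Proof.
have -> : al ^+ 2 = 6 * al - 1 + 4 * (s2 ^+ 2 - 2) by rewrite /al; ring.
by rewrite s2K subrr mulr0 addr0.
Qed.
Lemma be2 : be ^+ 2 = 6 * be - 1.
Proof.
have -> : be ^+ 2 = 6 * be - 1 + 4 * (s2 ^+ 2 - 2) by rewrite /be; ring.
by rewrite s2K subrr mulr0 addr0.
Qed.

Lemma closedB n : (B n)%:R * (al - be) = al ^+ n - be ^+ n.
Proof.
suff: (B n)%:R * (al - be) = al ^+ n - be ^+ n /\
      (B n.+1)%:R * (al - be) = al ^+ n.+1 - be ^+ n.+1 by case.
elim: n => [|n [e1 e2]].
  split; first by rewrite !expr0 mul0r subrr.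
  by rewrite mul1r !expr1.
split => //; rewrite BSS natrB; last by have := B_mono n.+1; have := B_mono n; lia.
rewrite natrM mulrBl -mulrA e2 e1.
rewrite -[n.+2]addn2 !exprD al2 be2 !exprS; ring.
Qed.

Lemma closedC n : (C n)%:R * 2 = al ^+ n + be ^+ n.
Proof.
suff: (C n)%:R * 2 = al ^+ n + be ^+ n /\
      (C n.+1)%:R * 2 = al ^+ n.+1 + be ^+ n.+1 by case.
elim: n => [|n [e1 e2]].
  split; first by rewrite !expr0 mul1r.
  by rewrite /= !expr1 /al /be; ring.
split => //; rewrite CSS natrB; last by have := C_mono n.+1; have := C_mono n; lia.
rewrite natrM mulrBl -mulrA e2 e1.
rewrite -[n.+2]addn2 !exprD al2 be2 !exprS; ring.
Qed.
Lemma s2_neq0 : s2 != 0.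
Proof. apply/eqP => h; have := s2K; rewrite h expr0n /= => /eqP; rewrite eq_sym pnatr_eq0. by []. Qed.
Lemma d_neq0 : al - be != 0.
Proof.
have -> : al - be = 4 * s2 by rewrite /al /be; ring.
by rewrite mulf_neq0 ?s2_neq0 // pnatr_eq0.
Qed.
Lemma d2 : (al - be) ^+ 2 = 32.
Proof.
have -> : (al - be) ^+ 2 = 16 * s2 ^+ 2 by rewrite /al /be; ring.
by rewrite s2K; ring.
Qed.
Lemma hB k : (B k)%:R = (al ^+ k - be ^+ k) / (al - be).
Proof. by rewrite -closedB mulfK // d_neq0. Qed.
Lemma hC k : (C k)%:R = (al ^+ k + be ^+ k) / 2.
Proof. by rewrite -closedC mulfK // pnatr_eq0. Qed.

Lemma I1 m n : B (m + n) = (B m * C n + B n * C m)%N.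
Proof.
apply/eqP; rewrite -(eqr_nat algC) natrD !natrM !hB !hC !exprD; apply/eqP.
by field; rewrite ?d_neq0 ?pnatr_eq0.
Qed.

Lemma I2 m n : C (m + n) = (C m * C n + 8 * B m * B n)%N.
Proof.
apply/eqP; rewrite -(eqr_nat algC) natrD !natrM !hB !hC !exprD; apply/eqP.
have -> : (8%:R : algC) = (al - be) ^+ 2 / 4 by rewrite d2; field.
by field; rewrite ?d_neq0 ?pnatr_eq0.
Qed.

Lemma I3 n : (C n ^ 2 = 8 * B n ^ 2 + 1)%N.
Proof.
apply/eqP; rewrite -(eqr_nat algC) !natrX natrD natrM natrX hB hC; apply/eqP.
have -> : (8%:R : algC) = (al - be) ^+ 2 / 4 by rewrite d2; field.
have -> : (1%:R : algC) = al ^+ n * be ^+ n by rewrite -exprMn albe expr1n.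
by field; rewrite ?d_neq0 ?pnatr_eq0.
Qed.
Local Close Scope ring_scope.
Open Scope nat_scope.

Lemma coprimeBC n : coprime (B n) (C n).
Proof.
rewrite /coprime; set g := gcdn _ _.
have h1 : g %| C n ^ 2 by apply: dvdn_exp => //; apply: dvdn_gcdr.
have h2 : g %| 8 * B n ^ 2 by apply: dvdn_mull; apply: dvdn_exp => //; apply: dvdn_gcdl.
by move: h1; rewrite I3 dvdn_addr // dvdn1.
Qed.

Lemma gcdB_step m n : gcdn (B (m + n)) (B n) = gcdn (B m) (B n).
Proof.
rewrite I1 gcdnC addnC [B n * _]mulnC gcdnMDl Gauss_gcdl 1?gcdnC //.
exact: coprimeBC.
Qed.

Lemma gcdB m n : gcdn (B m) (B n) = B (gcdn m n).
Proof.
have [k] := ubnP (m + n); elim: k m n => [|k IH] m n // lt.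
case: m lt => [|m] lt; first by rewrite (_ : B 0 = 0) // !gcd0n.
case: n lt => [|n] lt; first by rewrite (_ : B 0 = 0) // !gcdn0.
case: (leqP m n) => h.
  have -> : n.+1 = (n - m) + m.+1 by lia.
  rewrite gcdnC gcdB_step IH; last by lia.
  by rewrite gcdnC -gcdnDr addnC.
have -> : m.+1 = (m - n) + n.+1 by lia.
rewrite gcdB_step IH; last by lia.
by rewrite [in RHS]gcdnC gcdnDr gcdnC.
Qed.

Lemma B_dvd d n : d %| n -> B d %| B n.
Proof. by move=> h; apply/gcdn_idPl; rewrite gcdB (gcdn_idPl h). Qed.

Lemma lte k m : exists X Y, B (k.+1 * m) = k.+1 * C m ^ k * B m + B m ^ 3 * X /\
   C (k.+1 * m) = C m ^ k.+1 + B m ^ 2 * Y.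
Proof.
elim: k => [|k [X [Y [e1 e2]]]].
  by exists 0, 0; rewrite !mul1n !muln0 !addn0 ?expn0 ?expn1 ?mul1n ?muln1.
exists (X * C m + Y), (Y * C m + 8 * k.+1 * C m ^ k + 8 * B m ^ 2 * X).
rewrite mulSn addnC I1 I2 e1 e2; split; rewrite !expnS; ring.
Qed.

Lemma key_q p q m f : prime p -> prime q -> 0 < m -> p %| B m ->
  f * B m %| B (q * m) -> p %| f -> p = q /\ ~~ (p ^ 2 %| f).
Proof.
move=> pp pq m0 pB.
have Bm0 : 0 < B m by apply: B_gt0.
have [k qk] : exists k, q = k.+1 by exists q.-1; rewrite prednK // prime_gt0.
have [X [Y [e1 _]]] := lte k m.
have eQ : B (q * m) = (q * C m ^ k + B m ^ 2 * X) * B m.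
  by rewrite qk e1; ring.
rewrite eQ dvdn_pmul2r // => fQ pf.
have pC : ~~ (p %| C m).
  apply/negP => pC; have := coprimeBC m; rewrite /coprime => /eqP g1.
  have : p %| gcdn (B m) (C m) by rewrite dvdn_gcd pB.
  by rewrite g1 dvdn1 => /eqP p1; move: pp; rewrite p1.
have pB2 : p %| B m ^ 2 * X by rewrite dvdn_mulr // dvdn_exp.
have pqC : p %| q * C m ^ k.
  by have := dvdn_trans pf fQ; rewrite dvdn_addl.
have pq' : p %| q.
  by move: pqC; rewrite Euclid_dvdM // Euclid_dvdX // (negbTE pC) /= orbF.
have epq : p = q by apply/eqP; rewrite -dvdn_prime2.
split => //; apply/negP => p2f.
have p2Q := dvdn_trans p2f fQ.
have p2B : p ^ 2 %| B m ^ 2 * X by rewrite dvdn_mulr // dvdn_exp2r.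
move: p2Q; rewrite dvdn_addl // Gauss_dvdl; last first.
  by apply: coprimeXl; apply: coprimeXr; rewrite prime_coprime.
rewrite -epq => /dvdn_leq; rewrite prime_gt0 // => /(_ isT).
have := prime_gt1 pp; case: p pp {pf p2f pB pC pB2 pqC pq' epq p2B} => // p _ h.
rewrite expnS expn1; nia.
Qed.

Local Open Scope ring_scope.

Definition xx : algC := al ^+ 2.
Definition gC (d : nat) : algC :=
  (map_poly (intr : int -> algC) 'Phi_d).[xx] * be ^+ totient d.

Lemma sum_totient n : (0 < n)%N -> (\sum_(d <- divisors n) totient d)%N = n.
Proof.
move=> n0; move: (congr1 (fun p : {poly int} => size p) (prod_Cyclotomic n0)); rewrite /=.
rewrite -polyC1 size_XnsubC // size_prod_seq; last first.
  by move=> d _; apply: monic_neq0; apply: Cyclotomic_monic.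
move=> h; rewrite (eq_bigr (fun d => (totient d + 1)%N)) in h; last first.
  by move=> d _; rewrite size_Cyclotomic addn1.
by move: h; rewrite big_split /= sum1_size => h; lia.
Qed.

Lemma prod_gC n : (0 < n)%N -> \prod_(d <- divisors n) gC d = (al - be) * (B n)%:R.
Proof.
move=> n0; rewrite big_split /= -horner_prod -rmorph_prod prod_Cyclotomic //.
rewrite prodrXr sum_totient // rmorphB /= map_polyXn rmorph1 hornerE hornerXn.
rewrite hornerN hornerC [RHS]mulrC closedB /xx mulrBl mul1r.
by rewrite -exprM mulnC exprM expr2 -mulrA -exprMn albe expr1n mulr1.
Qed.

Lemma Phi1 : 'Phi_1 = 'X - 1.
Proof.
have := prod_Cyclotomic (ltn0Sn 0).
by rewrite (_ : divisors 1 = [:: 1%N]) // big_seq1 expr1.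
Qed.

Lemma gC1 : gC 1 = al - be.
Proof.
rewrite /gC Phi1 rmorphB /= map_polyX rmorph1 hornerD hornerN hornerX hornerC.
rewrite (_ : totient 1 = 1%N) // expr1 /xx mulrBl mul1r expr2 -mulrA albe mulr1 //.
Qed.

Lemma prod_gC2 n : (0 < n)%N -> \prod_(d <- divisors n | (1 < d)%N) gC d = (B n)%:R.
Proof.
move=> n0; apply: (mulfI d_neq0); rewrite /= -prod_gC // -{1}gC1.
rewrite (bigD1_seq 1%N) ?divisor1 ?divisors_uniq //=; congr (_ * _).
rewrite big_seq_cond [RHS]big_seq_cond; apply: eq_bigl => d.
case dn: (d \in divisors n) => //=.
have : (0 < d)%N by apply: (dvdn_gt0 n0); rewrite dvdn_divisors.
by case: d {dn} => [|[|d]].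
Qed.

Lemma al_ge0 : 0 <= al.
Proof. by rewrite /al addr_ge0 // mulr_ge0 // s2_ge0. Qed.
Lemma be_gt0 : 0 < be.
Proof.
have h : 2 * s2 < 3.
  rewrite -ltr_sqr ?nnegrE ?mulr_ge0 ?s2_ge0 //.
  rewrite exprMn s2K (_ : 2 ^+ 2 * 2 = 8%:R :> algC); last by ring.
  by rewrite (_ : 3 ^+ 2 = 9%:R :> algC) ?ltr_nat //; ring.
rewrite /be subr_gt0 //.
Qed.
Lemma be_ge0 : 0 <= be. Proof. exact: ltW be_gt0. Qed.
Lemma xx_ge1 : 1 <= xx.
Proof.
rewrite /xx -(expr1n _ 2%N) lerXn2r ?nnegrE ?al_ge0 //.
rewrite /al -subr_ge0 (_ : 3 + 2 * s2 - 1 = 2 + 2 * s2); last by ring.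
by rewrite addr_ge0 ?mulr_ge0 ?s2_ge0.
Qed.
Lemma xxbe : (xx - 1) * be = al - be.
Proof. by rewrite /xx mulrBl mul1r expr2 -mulrA albe mulr1. Qed.
Lemma five_le : 5 <= al - be.
Proof.
have -> : al - be = 4 * s2 by rewrite /al /be; ring.
rewrite -ler_sqr ?nnegrE ?mulr_ge0 ?s2_ge0 //.
rewrite exprMn s2K (_ : 4 ^+ 2 * 2 = 32%:R :> algC); last by ring.
by rewrite (_ : 5 ^+ 2 = 25%:R :> algC) ?ler_nat //; ring.
Qed.

Lemma card_coprime d : #|[pred k : 'I_d | coprime k d]| = totient d.
Proof.
rewrite totient_count_coprime -big_mkcond big_mkord -sum1_card.
by apply: eq_bigl => k; rewrite coprime_sym.
Qed.

Lemma gC_norm d : (0 < d)%N -> 5 ^+ totient d <= `|gC d|.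
Proof.
move=> d0; have [z pz] := C_prim_root_exists d0.
have z1 : `|z| = 1.
  apply/eqP; rewrite -(pexpr_eq1 d0) ?normr_ge0 // -normrX.
  by rewrite (prim_expr_order pz) normr1.
rewrite /gC (Cintr_Cyclotomic pz) /cyclotomic horner_prod.
rewrite normrM normr_prod normrX (ger0_norm be_ge0).
apply: (@le_trans _ _ ((xx - 1) ^+ totient d * be ^+ totient d)).
  rewrite -exprMn xxbe lerXn2r ?nnegrE ?five_le //.
  by have := five_le; apply: le_trans.
rewrite ler_wpM2r ?exprn_ge0 ?be_ge0 //.
rewrite -card_coprime -prodr_const.
apply: ler_prod => k _; rewrite subr_ge0 xx_ge1 /=.
rewrite hornerXsubC; apply: (le_trans _ (lerB_dist _ _)).
by rewrite (normrX _ z) z1 expr1n (ger0_norm (le_trans ler01 xx_ge1)).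
Qed.

Lemma s2_Aint : s2 \in Aint.
Proof.
apply: (@root_monic_Aint ('X^2 - 2%:P)).
- by rewrite /root !hornerE s2K subrr.
- exact: monicXnsubC.
- apply/polyOverP => i; rewrite coefB coefXn coefC rpredB ?rpred_nat //.
  by case: (i == 0%N); rewrite ?rpred_nat ?rpred0.
Qed.
Lemma al_Aint : al \in Aint.
Proof. by rewrite /al rpredD ?rpredM ?rpred_nat ?s2_Aint. Qed.
Lemma be_Aint : be \in Aint.
Proof. by rewrite /be rpredB ?rpredM ?rpred_nat ?s2_Aint. Qed.

Lemma gC_Aint d : gC d \in Aint.
Proof.
rewrite /gC rpredM ?rpredX ?be_Aint // rpred_horner ?rpredX ?al_Aint //.
by apply/polyOverP => i; rewrite coef_map /= Aint_int.
Qed.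

Lemma gC_neq0 d : (0 < d)%N -> gC d != 0.
Proof.
move=> d0; rewrite -normr_gt0; apply: lt_le_trans (gC_norm d0).
by rewrite exprn_gt0 // ltr0n.
Qed.

Lemma prod_split d : (1 < d)%N ->
  \prod_(e <- divisors d | (1 < e)%N) gC e =
  gC d * \prod_(e <- divisors d | (1 < e)%N && (e != d)) gC e.
Proof.
move=> d1; rewrite -big_filter (bigD1_seq d) ?filter_uniq ?divisors_uniq //.
  by rewrite big_filter_cond.
by rewrite mem_filter d1 /= -dvdn_divisors // ltnW.
Qed.

Lemma gC_rat d : (1 < d)%N -> gC d \in Crat.
Proof.
elim/ltn_ind: d => d IH d1.
have d0 : (0 < d)%N by apply: ltnW.
have := prod_gC2 d0; rewrite prod_split // => h.
have Rnz : \prod_(e <- divisors d | (1 < e)%N && (e != d)) gC e != 0.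
  rewrite prodf_seq_neq0; apply/allP => e _; apply/implyP => /andP[e1 _].
  by apply: gC_neq0; apply: ltnW.
have -> : gC d = (B d)%:R / \prod_(e <- divisors d | (1 < e)%N && (e != d)) gC e.
  by rewrite -h mulfK.
rewrite rpred_div ?rpred_nat // big_seq_cond rpred_prod // => e /andP[ed /andP[e1 ned]].
apply: IH => //; rewrite ltn_neqAle ned /= dvdn_leq //.
by rewrite dvdn_divisors.
Qed.

Lemma gC_int d : (1 < d)%N -> gC d \in Num.int.
Proof. by move=> d1; apply: Cint_rat_Aint; [apply: gC_rat | apply: gC_Aint]. Qed.

Definition f (d : nat) : nat := Num.truncn `|gC d|.

Lemma fE d : (1 < d)%N -> (f d)%:R = `|gC d|.
Proof. by move=> d1; rewrite /f truncnK // natr_norm_int // gC_int. Qed.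

Lemma f_ge d : (1 < d)%N -> (5 ^ totient d <= f d)%N.
Proof.
move=> d1; rewrite -(ler_nat algC) fE // natrX.
by apply: gC_norm; apply: ltnW.
Qed.

Lemma prodf n : (0 < n)%N -> B n = (\prod_(e <- divisors n | (1 < e)%N) f e)%N.
Proof.
move=> n0; apply/eqP; rewrite -(eqr_nat algC) natr_prod; apply/eqP.
rewrite -[LHS]ger0_norm ?ler0n // -prod_gC2 // normr_prod.
by rewrite big_seq_cond [RHS]big_seq_cond; apply: eq_bigr => e /andP[_ e1]; rewrite fE.
Qed.
Local Close Scope ring_scope.
Open Scope nat_scope.

Lemma pow5 t : 0 < t -> 5 * t <= 5 ^ t.
Proof.
elim: t => [|t IH] // _; case: t IH => [|t] IH //.
rewrite expnS; have := IH isT; lia.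
Qed.

Lemma pow5b t : 1 < t -> 2 * t <= 5 ^ t.-1.
Proof.
case: t => [|[|t]] // _; elim: t => [|t IH] //=.
rewrite expnS; move: IH => /=; lia.
Qed.

Lemma exp_mono y x : 0 < y -> 0 < x -> 5 ^ y * 5 ^ x.-1 <= 5 ^ (y * x).
Proof.
move=> y0 x0; rewrite -expnD leq_pexp2l //; nia.
Qed.

Lemma tot_ppow p a : prime p -> 0 < a -> p != 2 -> 5 * p ^ a <= 5 ^ totient (p ^ a).
Proof.
move=> pp a0 p2; rewrite totient_pfactor //.
have p3 : 3 <= p by have := prime_gt1 pp; case: p pp p2 => [|[|[|p]]].
set x := p.-1 * p ^ a.-1.
have e : p ^ a = p * p ^ a.-1 by rewrite -expnS prednK.
have hp : 0 < p ^ a.-1 by rewrite expn_gt0 prime_gt0.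
have x2 : 1 < x by rewrite /x; nia.
have h := pow5b x2.
have hx : 5 ^ x = 5 * 5 ^ x.-1 by rewrite -expnS prednK // ltnW.
have hpa : p ^ a <= 2 * x.
  rewrite e /x; have : p <= 2 * p.-1 by lia.
  by move=> h'; rewrite mulnA leq_mul2r h' orbT.
rewrite hx; lia.
Qed.

Lemma tot_odd m : 0 < m -> ~~ (2 %| m) -> 5 * m <= 5 ^ totient m.
Proof.
elim/ltn_ind: m => m IH m0 m2.
case: (ltngtP m 1) => [m1|m1|->]; [lia | | by rewrite (_ : totient 1 = 1)].
set p := pdiv m; have pp : prime p := pdiv_prime m1.
have pm : p %| m := pdiv_dvd m.
have p2 : p != 2 by apply: contraNneq m2 => <-.
have [m' cpm' em] := pfactor_coprime pp m0.
set a := logn p m in em.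
have a0 : 0 < a by rewrite /a logn_gt0 mem_primes pp m0 pm.
have hpa : 1 < p ^ a by rewrite -(expn0 p) ltn_exp2l ?prime_gt1.
have m'0 : 0 < m' by move: m0; rewrite em muln_gt0 => /andP[].
have lt : m' < m by rewrite em -{1}(muln1 m') ltn_pmul2l.
have m'2 : ~~ (2 %| m') by apply: contra m2; rewrite em => h; apply: dvdn_mulr.
have co : coprime m' (p ^ a) by rewrite coprime_sym coprimeXl.
rewrite em totient_coprime //.
have h1 := IH m' lt m'0 m'2.
have h2 := tot_ppow pp a0 p2.
have y0 : 0 < totient m' by rewrite totient_gt0.
have x0 : 0 < totient (p ^ a) by rewrite totient_gt0 expn_gt0 prime_gt0.
apply: leq_trans (exp_mono y0 x0).
have : 5 ^ totient (p ^ a) = 5 * 5 ^ (totient (p ^ a)).-1 by rewrite -expnS prednK.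
nia.
Qed.

Lemma tot_bound d : 0 < d -> d < 5 ^ totient d.
Proof.
move=> d0; have [m cm ed] := pfactor_coprime (isT : prime 2) d0.
set a := logn 2 d in ed.
have m0 : 0 < m by move: d0; rewrite ed muln_gt0 => /andP[].
have m2 : ~~ (2 %| m) by rewrite -prime_coprime.
have hm := tot_odd m0 m2.
have co : coprime m (2 ^ a) by rewrite coprime_sym coprimeXl.
rewrite ed totient_coprime //.
case: a {ed co} => [|[|a]].
- by rewrite expn0 muln1 (_ : totient 1 = 1) // muln1; lia.
- by rewrite expn1 (_ : totient 2 = 1) // muln1; lia.
have x0 : 0 < totient (2 ^ a.+2) by rewrite totient_gt0 expn_gt0.
have y0 : 0 < totient m by rewrite totient_gt0.
apply: leq_trans (exp_mono y0 x0).
rewrite totient_pfactor //= mul1n.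
have x1 : 1 < 2 ^ a.+1 by rewrite -{1}(expn0 2) ltn_exp2l.
have h := pow5b x1.
rewrite (_ : 2 ^ a.+2 = 2 * 2 ^ a.+1); last by rewrite expnS.
have Z0 : 0 < 5 ^ (2 ^ a.+1).-1 by rewrite expn_gt0.
have Y : m < 5 ^ totient m by lia.
apply: (@leq_trans (m * 5 ^ (2 ^ a.+1).-1).+1).
  by rewrite ltnS leq_mul2l h orbT.
nia.
Qed.

Definition Rp d := \prod_(e <- divisors d | (1 < e) && (e != d)) f e.

Lemma B_split d : 1 < d -> B d = f d * Rp d.
Proof.
move=> d1; rewrite prodf ?(ltnW d1) // -big_filter (bigD1_seq d) ?filter_uniq ?divisors_uniq //.
  by rewrite big_filter_cond.
by rewrite mem_filter d1 /= -dvdn_divisors // ltnW.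
Qed.

Lemma Bq_dvd_R d q : 1 < d -> q \in primes d -> B (d %/ q) %| Rp d.
Proof.
move=> d1 qd; have d0 : 0 < d := ltnW d1.
move: qd; rewrite mem_primes => /and3P[pq _ qdv].
have edq : d = d %/ q * q by rewrite divnK.
have dq0 : 0 < d %/ q by rewrite divn_gt0 ?prime_gt0 // dvdn_leq.
have dqd : d %/ q %| d by rewrite {2}edq dvdn_mulr.
have dqlt : d %/ q < d by rewrite ltn_Pdiv // prime_gt1.
have E : \prod_(e <- divisors d | ((1 < e) && (e != d)) && (e %| d %/ q)) f e =
         \prod_(e <- divisors (d %/ q) | 1 < e) f e.
  rewrite -big_filter -[RHS]big_filter; apply: perm_big.
  apply: uniq_perm; rewrite ?filter_uniq ?divisors_uniq // => e.
  rewrite !mem_filter -!dvdn_divisors //.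
  case ed: (e %| d %/ q); rewrite ?andbF ?andbT //=.
  have -> : e %| d by apply: dvdn_trans dqd.
  have : e <= d %/ q by apply: dvdn_leq.
  rewrite andbT => h; case: (e =P d) => [ed'|]; last by rewrite andbT.
  by move: h; rewrite ed' leqNgt dqlt.
by rewrite /Rp (bigID (fun e => e %| d %/ q)) /= E -prodf // dvdn_mulr.
Qed.

Lemma key d q p : 1 < d -> q \in primes d -> prime p -> p %| f d ->
  p %| B (d %/ q) -> p = q /\ ~~ (p ^ 2 %| f d).
Proof.
move=> d1 qd pp pf pB.
have qd' := qd; move: qd'; rewrite mem_primes => /and3P[pq d0 qdv].
have edq : q * (d %/ q) = d by rewrite mulnC divnK.
have dq0 : 0 < d %/ q by rewrite divn_gt0 ?prime_gt0 // dvdn_leq.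
apply: (key_q pp pq dq0 pB) => //.
by rewrite edq (B_split d1); apply: dvdn_mul => //; apply: Bq_dvd_R.
Qed.

Definition prim d p := [&& prime p, p %| f d & all (fun q => ~~ (p %| B (d %/ q))) (primes d)].

Lemma f_gt d : 1 < d -> d < f d.
Proof. by move=> d1; apply: leq_trans (f_ge d1); apply: tot_bound; apply: ltnW. Qed.

Lemma prim_has d : 1 < d -> has (prim d) (primes (f d)).
Proof.
move=> d1; apply/negPn/negP => /hasPn nh.
have f0 : 0 < f d := leq_ltn_trans (leq0n d) (f_gt d1).
have : f d %| d.
  apply/dvdn_partP => // p; rewrite mem_primes => /and3P[pp _ pf].
  have /nh : p \in primes (f d) by rewrite mem_primes pp f0.
  rewrite /prim pp pf /= => /allPn[q qd /negbNE pB].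
  have [epq np2] := key d1 qd pp pf pB.
  have pd : p %| d by move: qd; rewrite mem_primes -epq => /and3P[].
  rewrite p_part; move: np2; rewrite pfactor_dvdn // -ltnNge ltnS.
  case: (logn p (f d)) => [|[|]] //= _; by rewrite expn1.
move/(dvdn_leq (ltnW d1)); rewrite leqNgt f_gt //.
Qed.

Definition pr d := head 0 [seq p <- primes (f d) | prim d p].

Lemma pr_prim d : 1 < d -> prim d (pr d).
Proof.
move=> d1; have := prim_has d1; rewrite has_filter /pr.
case E: [seq p <- primes (f d) | prim d p] => [|x s] // _ /=.
have : x \in [seq p <- primes (f d) | prim d p] by rewrite E mem_head.
by rewrite mem_filter => /andP[].
Qed.

Lemma f_dvdB d : 1 < d -> f d %| B d.
Proof. by move=> d1; rewrite (B_split d1) dvdn_mulr. Qed.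

Lemma prim_side d g p : 1 < d -> prim d p -> g %| d -> g != d -> ~~ (p %| B g).
Proof.
move=> d1 /and3P[pp pf /allP pa] gd ngd; have d0 : 0 < d := ltnW d1.
have g0 : 0 < g by apply: dvdn_gt0 gd.
have ek : d = g * (d %/ g) by rewrite mulnC divnK.
have k1 : 1 < d %/ g.
  case E: (d %/ g) => [|[|k]] //.
  - by move: ek; rewrite E muln0; lia.
  - by move: ngd; rewrite ek E muln1 eqxx.
set q := pdiv (d %/ g).
have pq : prime q := pdiv_prime k1.
have qk : q %| d %/ g := pdiv_dvd _.
have qd : q \in primes d.
  by rewrite mem_primes pq d0 /= (dvdn_trans qk) // {2}ek dvdn_mull.
have gdq : g %| d %/ q.
  rewrite {1}ek -(divnK qk) mulnA mulnK ?prime_gt0 //; exact: dvdn_mulr.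
apply/negP => pg; have := pa q qd; rewrite (dvdn_trans pg) //.
exact: B_dvd.
Qed.

Lemma prim_inj n d1 d2 p : d1 %| n -> d2 %| n -> 1 < d1 -> 1 < d2 ->
  prim d1 p -> prim d2 p -> d1 = d2.
Proof.
move=> _ _ h1 h2 P1 P2; apply/eqP; apply/negPn/negP => ne.
have pB1 : p %| B d1 by have /and3P[_ pf _] := P1; apply: dvdn_trans pf (f_dvdB h1).
have pB2 : p %| B d2 by have /and3P[_ pf _] := P2; apply: dvdn_trans pf (f_dvdB h2).
have pg : p %| B (gcdn d1 d2) by rewrite -gcdB dvdn_gcd pB1.
case: (gcdn d1 d2 =P d1) => [e1|n1].
  have n2 : gcdn d1 d2 != d2 by rewrite e1.
  by have := prim_side h2 P2 (dvdn_gcdr _ _) n2; rewrite pg.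
by have := prim_side h1 P1 (dvdn_gcdl _ _) (introN eqP n1); rewrite pg.
Qed.

Lemma tau_lb s m : 0 < m -> uniq s -> all prime s -> all (fun p => p %| m) s ->
  2 ^ size s <= tau m.
Proof.
elim: s m => [|p s IH] m m0 /=; first by rewrite /tau; case: (divisors m) (divisors_id m0).
move=> /andP[ps us] /andP[pp ps'] /andP[pm sm].
have [m' cpm' em] := pfactor_coprime pp m0.
set a := logn p m in em.
have m'0 : 0 < m' by move: m0; rewrite em muln_gt0 => /andP[].
have sm' : all (fun p => p %| m') s.
  apply/allP => r rs; have rp := allP ps' r rs.
  have := allP sm r rs; rewrite /= em Gauss_dvdl //.
  apply: coprimeXr; rewrite prime_coprime // dvdn_prime2 //.
  by apply: contraNneq ps => e; rewrite -e.
have IH' := IH m' m'0 us ps' sm'.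
rewrite expnS; apply: leq_trans (_ : 2 * tau m' <= tau m).
  by rewrite leq_mul2l.
rewrite /tau mul2n -addnn -[X in _ + X](size_map (muln p) (divisors m')) -size_cat.
apply: uniq_leq_size.
  rewrite cat_uniq divisors_uniq map_inj_uniq ?divisors_uniq //; last first.
    by move=> x y /eqP; rewrite eqn_mul2l eqn0Ngt prime_gt0 //= => /eqP.
  rewrite andbT; apply/hasPn => x /mapP[y yd ->].
  apply/negP; rewrite -dvdn_divisors // => /(dvdn_trans (dvdn_mulr _ (dvdnn p))).
  by move=> h; move: cpm'; rewrite prime_coprime // h.
have a0 : 0 < a by rewrite /a logn_gt0 mem_primes pp m0.
move=> x; rewrite mem_cat -!dvdn_divisors // => /orP[xd|/mapP[y]].
  by rewrite em dvdn_mulr.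
rewrite -dvdn_divisors // => yd ->; rewrite em mulnC dvdn_mul //.
by rewrite -{1}(expn1 p) dvdn_exp2l.
Qed.

Theorem theorem3p2 (n : nat) : 1 <= n -> balancing (tau n %/ 3) < tau (balancing n).
Proof.
move=> n0.
set D := [seq d <- divisors n | 1 < d].
have memD d : d \in D -> d %| n /\ 1 < d.
  by rewrite mem_filter -dvdn_divisors // => /andP[].
have uS : uniq (map pr D).
  rewrite map_inj_in_uniq ?filter_uniq ?divisors_uniq // => x y xD yD e.
  have [xn x1] := memD x xD; have [yn y1] := memD y yD.
  apply: (prim_inj xn yn x1 y1 (pr_prim x1)); rewrite e; exact: pr_prim.
have pS : all prime (map pr D).
  by apply/allP => p /mapP[d /memD[_ d1] ->]; have /and3P[] := pr_prim d1.
have dS : all (fun p => p %| B n) (map pr D).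
  apply/allP => p /mapP[d /memD[dn d1] ->]; have /and3P[_ pf _] := pr_prim d1.
  by apply: dvdn_trans pf (dvdn_trans (f_dvdB d1) (B_dvd dn)).
have h := tau_lb (B_gt0 n0) uS pS dS.
rewrite size_map in h.
have szD : (size D).+1 = tau n.
  rewrite /tau -(count_predC (fun d => 1 < d) (divisors n)) size_filter addnC.
  rewrite -add1n; congr (_ + _).
  rewrite (@eq_in_count _ _ (pred1 1)); last first.
    move=> d; rewrite -dvdn_divisors // => dn /=.
    by have := dvdn_gt0 n0 dn; case: d {dn} => [|[|]].
  by rewrite count_uniq_mem ?divisors_uniq ?divisor1.
apply: leq_trans h.
set k := tau n %/ 3.
have k3 : 3 * k <= tau n by rewrite mulnC leq_trunc_div.
case: k k3 => [|k] k3; first by rewrite (_ : B 0 = 0) // expn_gt0.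
apply: leq_ltn_trans (B_le6 k) _.
have h8 : forall j, 6 ^ j <= 8 ^ j by elim=> // j IH; rewrite !expnS leq_mul.
have h6 : 6 ^ k <= 2 ^ (3 * k) by rewrite expnM.
have h2 : 2 ^ (3 * k) < 2 ^ size D by rewrite ltn_exp2l //; lia.
exact: leq_ltn_trans h6 h2.
Qed.
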